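(* Let $\kappa,\theta,\sigma>0$ and $\chi>\gamma>0$ be constants. Define $$\xi:=\sqrt{\kappa^2+2\sigma^2(\chi-\gamma)},\quad \alpha:=\frac{\kappa\theta}{\sigma^2}\Big(1-\frac{\kappa}{\xi}\Big),\quad \beta:=\frac{2\kappa\theta}{\sigma^2},\quad \zeta:=\frac{2\xi}{\sigma^2},\quad \nu:=\frac{\alpha\zeta}{\beta}=\frac{\xi-\kappa}{\sigma^2},$$ and for $r\in(0,\infty)$ let $$u_+(r):=e^{-\nu r}M(\alpha,\beta,\zeta r),\qquad u_-(r):=e^{-\nu r}U(\alpha,\beta,\zeta r).$$ Then $u_+$ is increasing on $(0,\infty)$ and $u_-$ is decreasing on $(0,\infty)$.
   Context: $M$ and $U$ denote the confluent hypergeometric (Kummer) functions of the first and second kind: $M(a,b,z)=\sum_{n\ge 0}\frac{(a)_n}{(b)_n}\frac{z^n}{n!}$ with $(a)_n=a(a+1)\cdots(a+n-1)$ the Pochhammer symbol, and for $a>0$, $U(a,b,z)=\frac{1}{\Gamma(a)}\int_0^\infty e^{-zt}t^{a-1}(1+t)^{b-a-1}\,dt$ for $z>0$. The functions $u_\pm$ are solutions of the ODE $\kappa(\theta-r)u'(r)+\tfrac12\sigma^2 r\,u''(r)-(\chi-\gamma)r\,u(r)=0$ on $(0,\infty)$, arising from a Cox–Ingersoll–Ross process $dR_t=\kappa(\theta-R_t)dt+\sigma\sqrt{R_t}\,dW_t$. *)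

(* Defs.v *)
From Stdlib Require Import Reals Arith.
From Coquelicot Require Import Coquelicot.
Open Scope R_scope.

Fixpoint poch (a : R) (n : nat) : R :=
  match n with
  | O => 1
  | S k => poch a k * (a + INR k)
  end.

Definition kummerM (a b z : R) : R :=
  Series (fun n => poch a n / poch b n * z ^ n / INR (Factorial.fact n)).

Definition GammaF (a : R) : R :=
  RInt_gen (fun t => Rpower t (a - 1) * exp (- t))
           (at_right 0) (Rbar_locally p_infty).

(* Kummer's function of the second kind (Tricomi), integral representation
   valid for a > 0, z > 0:
   U(a,b,z) = 1/Gamma(a) int_0^oo e^(-z t) t^(a-1) (1+t)^(b-a-1) dt. *)
Definition kummerU (a b z : R) : R :=
  / GammaF a *
  RInt_gen (fun t => exp (- (z * t)) * Rpower t (a - 1) * Rpower (1 + t) (b - a - 1))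
           (at_right 0) (Rbar_locally p_infty).

(* Main.v *)
From Stdlib Require Import Reals Lra Classical FunctionalExtensionality.
From Coquelicot Require Import Coquelicot.
Require Import Defs.
Open Scope R_scope.

Definition cK (a b : R) (n : nat) : R := poch a n / poch b n / INR (Factorial.fact n).

Lemma poch_pos a n : 0 < a -> 0 < poch a n.
Proof. intros Ha; induction n; simpl. lra. apply Rmult_lt_0_compat; auto. pose proof (pos_INR n); lra. Qed.

Lemma poch_S a n : poch a (S n) = a * poch (a+1) n.
Proof.
  induction n. simpl; ring.
  change (poch a (S (S n))) with (poch a (S n) * (a + INR (S n))).
  rewrite IHn. simpl poch. rewrite S_INR. ring.
Qed.

Lemma fact_pos n : 0 < INR (Factorial.fact n).
Proof. apply lt_0_INR. apply Factorial.lt_O_fact. Qed.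

Lemma cK_pos a b n : 0 < a -> 0 < b -> 0 < cK a b n.
Proof.
  intros; unfold cK. pose proof (poch_pos a n H). pose proof (poch_pos b n H0).
  pose proof (fact_pos n). apply Rdiv_lt_0_compat; [apply Rdiv_lt_0_compat|]; auto.
Qed.

Lemma cK_ratio a b n : 0 < a -> 0 < b ->
  cK a b (S n) / cK a b n = (a + INR n) / ((b + INR n) * INR (S n)).
Proof.
  intros Ha Hb. unfold cK. simpl poch. rewrite fact_simpl, mult_INR.
  pose proof (poch_pos a n Ha). pose proof (poch_pos b n Hb). pose proof (fact_pos n).
  pose proof (pos_INR n). rewrite S_INR. field. repeat split; lra.
Qed.

Lemma cK_radius a b : 0 < a -> 0 < b -> CV_radius (cK a b) = p_infty.
Proof.
  intros Ha Hb. apply CV_radius_infinite_DAlembert.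
  - intros n; pose proof (cK_pos a b n Ha Hb); lra.
  - apply is_lim_seq_le_le with (u := fun _ => 0) (w := fun n => (1 + a/b) * / INR (S n)).
    + intros n. rewrite cK_ratio by auto. pose proof (pos_INR n).
      rewrite S_INR. rewrite Rabs_pos_eq.
      2:{ apply Rdiv_le_0_compat; [lra|]. apply Rmult_lt_0_compat; lra. }
      split. apply Rdiv_le_0_compat; [lra|]. apply Rmult_lt_0_compat; lra.
      unfold Rdiv. rewrite Rinv_mult.
      rewrite <- Rmult_assoc. apply Rmult_le_compat_r.
      apply Rlt_le, Rinv_0_lt_compat; lra.
      apply (Rmult_le_reg_r (b + INR n)); [lra|].
      rewrite Rmult_assoc, Rinv_l by lra. field_simplify; [|lra].
      apply (Rmult_le_reg_r b); [lra|]. field_simplify; [|lra].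
      assert (0 <= a * INR n) by (apply Rmult_le_pos; lra). nra.
    + apply is_lim_seq_const.
    + replace (Finite 0) with (Rbar_mult (1 + a/b) 0) by (simpl; f_equal; ring).
      apply is_lim_seq_scal_l.
      replace (Finite 0) with (Rbar_inv p_infty) by reflexivity.
      apply is_lim_seq_inv; [|discriminate].
      apply (is_lim_seq_incr_1 INR). apply is_lim_seq_INR.
Qed.

Lemma kummerM_PS a b z : kummerM a b z = PSeries (cK a b) z.
Proof.
  unfold kummerM, PSeries. apply Series_ext. intros n. unfold cK.
  unfold Rdiv; ring.
Qed.

Lemma PS_derive_cK a b n : 0 < a -> 0 < b ->
  PS_derive (cK a b) n = a / b * cK (a+1) (b+1) n.
Proof.
  intros Ha Hb. unfold PS_derive, cK. rewrite !poch_S. rewrite fact_simpl, mult_INR.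
  pose proof (poch_pos (a+1) n ltac:(lra)). pose proof (poch_pos (b+1) n ltac:(lra)).
  pose proof (fact_pos n). pose proof (pos_INR n). rewrite S_INR. field. repeat split; lra.
Qed.

Lemma cK_cmp a b n : 0 < a -> a < b ->
  cK a b n = cK (a+1) (b+1) n * (a * (b + INR n) / (b * (a + INR n))).
Proof.
  intros Ha Hab. pose proof (pos_INR n).
  assert (Q: forall c, poch c n * (c + INR n) = c * poch (c+1) n).
  { intros c. rewrite <- poch_S. reflexivity. }
  pose proof (poch_pos (a+1) n ltac:(lra)). pose proof (poch_pos (b+1) n ltac:(lra)).
  pose proof (fact_pos n).
  assert (Ha': poch a n = a * poch (a+1) n / (a + INR n)) by (rewrite <- Q; field; lra).
  assert (Hb': poch b n = b * poch (b+1) n / (b + INR n)) by (rewrite <- Q; field; lra).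
  unfold cK. rewrite Ha', Hb'. field. repeat split; lra.
Qed.

Lemma ex_ps_cK a b z : 0 < a -> 0 < b -> ex_pseries (cK a b) z.
Proof. intros; apply CV_radius_inside. rewrite cK_radius by auto. exact I. Qed.

Lemma Series_nonneg e : ex_series e -> (forall n, 0 <= e n) -> 0 <= Series e.
Proof.
  intros He Hn. assert (Series (fun n => 0 * e n) = 0) by (rewrite Series_scal_l; ring).
  rewrite <- H. apply Series_le; auto. intros; split; [lra|]. rewrite Rmult_0_l; auto.
Qed.

Lemma diff_pos a b z : 0 < a -> a < b -> 0 < z ->
  0 < PSeries (cK (a+1) (b+1)) z - PSeries (cK a b) z.
Proof.
  intros Ha Hab Hz.
  rewrite <- PSeries_minus by (apply ex_ps_cK; lra).
  pose proof (ex_pseries_minus _ _ z (ex_ps_cK (a+1) (b+1) z ltac:(lra) ltac:(lra))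
      (ex_ps_cK a b z ltac:(lra) ltac:(lra))) as Hex.
  set (e := fun k => PS_minus (cK (a + 1) (b + 1)) (cK a b) k * z ^ k).
  assert (He : ex_series e).
  { eapply ex_series_ext; [|exact Hex]. intros n. unfold e; simpl.
    rewrite pow_n_pow. unfold scal; simpl; unfold mult; simpl. ring. }
  assert (Ee : forall n, e n = cK (a+1) (b+1) n * (1 - a * (b + INR n) / (b * (a + INR n))) * z ^ n).
  { intros n. unfold e, PS_minus, plus, opp; simpl. rewrite (cK_cmp a b n) by lra. ring. }
  assert (Fn : forall n, 0 <= 1 - a * (b + INR n) / (b * (a + INR n))).
  { intros n. pose proof (pos_INR n).
    assert (a * (b + INR n) / (b * (a + INR n)) <= 1).
    { apply (Rmult_le_reg_r (b * (a + INR n))). apply Rmult_lt_0_compat; lra.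
      field_simplify; [|lra]. nra. }
    lra. }
  assert (Hn : forall n, 0 <= e n).
  { intros n. rewrite Ee. apply Rmult_le_pos; [apply Rmult_le_pos|].
    pose proof (cK_pos (a+1) (b+1) n ltac:(lra) ltac:(lra)); lra. apply Fn.
    apply pow_le; lra. }
  unfold PSeries. fold e.
  rewrite Series_incr_1_aux by (rewrite Ee; simpl; field; lra).
  assert (He1 : ex_series (fun k => e (S k))) by (apply (proj1 (ex_series_incr_1 e)); exact He).
  assert (He2 : ex_series (fun k => e (S (S k)))) by (apply (proj1 (ex_series_incr_1 (fun k => e (S k)))); exact He1).
  rewrite Series_incr_1 by exact He1.
  apply Rplus_lt_le_0_compat.
  - rewrite Ee. apply Rmult_lt_0_compat; [apply Rmult_lt_0_compat|].
    apply cK_pos; lra.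
    simpl INR. apply (Rmult_lt_reg_r (b * (a + 1))). apply Rmult_lt_0_compat; lra.
    field_simplify; [|lra]. nra. apply pow_lt; lra.
  - apply Series_nonneg; [exact He2 | intros; apply Hn].
Qed.

Lemma PSeries_derive_cK a b y : 0 < a -> 0 < b ->
  PSeries (PS_derive (cK a b)) y = a / b * PSeries (cK (a+1) (b+1)) y.
Proof.
  intros; unfold PSeries. rewrite <- Series_scal_l. apply Series_ext. intros n.
  rewrite PS_derive_cK by auto. ring.
Qed.

Lemma uplus_incr a b z nu : 0 < a -> a < b -> 0 < z -> nu = a * z / b ->
  forall r s, 0 < r -> r < s ->
  exp (- (nu * r)) * kummerM a b (z * r) < exp (- (nu * s)) * kummerM a b (z * s).
Proof.
  intros Ha Hab Hz Hnu r s Hr Hrs.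
  rewrite !kummerM_PS.
  set (f := fun x => exp (- (nu * x)) * PSeries (cK a b) (z * x)).
  set (df := fun x => exp (- (nu * x)) * (nu * (PSeries (cK (a+1) (b+1)) (z * x) - PSeries (cK a b) (z * x)))).
  assert (D : forall x, is_derive f x (df x)).
  { intros x. unfold f, df.
    assert (H1 : is_derive (fun x => exp (- (nu * x))) x (- nu * exp (- (nu * x)))).
    { auto_derive; auto. ring. }
    assert (H2 : is_derive (fun x => PSeries (cK a b) (z * x)) x (z * (a / b * PSeries (cK (a+1) (b+1)) (z * x)))).
    { rewrite <- PSeries_derive_cK by lra.
      apply (is_derive_comp (PSeries (cK a b)) (fun x => z * x) x).
      apply is_derive_PSeries. rewrite cK_radius by lra. exact I.
      auto_derive; auto. ring. }
    pose proof (is_derive_mult _ _ x _ _ H1 H2 ltac:(intros; apply Rmult_comm)) as H3.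
    simpl in H3. unfold mult, plus in H3; simpl in H3.
    replace (exp (- (nu * x)) * (nu * (PSeries (cK (a + 1) (b + 1)) (z * x) - PSeries (cK a b) (z * x))))
      with (- nu * exp (- (nu * x)) * PSeries (cK a b) (z * x) +
            exp (- (nu * x)) * (z * (a / b * PSeries (cK (a + 1) (b + 1)) (z * x)))).
    exact H3. rewrite Hnu. field. lra. }
  destruct (MVT_cor2 f df r s Hrs) as [c [Hc Hcin]].
  { intros c _. apply is_derive_Reals. apply D. }
  change (f r < f s).
  assert (0 < df c).
  { unfold df. apply Rmult_lt_0_compat. apply exp_pos.
    apply Rmult_lt_0_compat. rewrite Hnu. apply Rdiv_lt_0_compat; [apply Rmult_lt_0_compat|]; lra.
    apply diff_pos; try lra. apply Rmult_lt_0_compat; lra. }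
  nra.
Qed.
Lemma exp_le' x y : x <= y -> exp x <= exp y.
Proof. intros [H|H]. left; apply exp_increasing; auto. subst; lra. Qed.

Lemma ball_R (x e y : R) : ball x e y <-> Rabs (y - x) < e.
Proof. unfold ball; simpl; unfold AbsRing_ball, abs, minus, plus, opp; simpl. tauto. Qed.

Section Gen.
Variable f : R -> R.
Hypothesis fpos : forall t, 0 < t -> 0 <= f t.
Hypothesis fcont : forall t, 0 < t -> continuous f t.

Lemma exR a b : 0 < a -> 0 < b -> ex_RInt f a b.
Proof.
  intros. apply (@ex_RInt_continuous R_CompleteNormedModule). intros z Hz. apply fcont.
  assert (0 < Rmin a b) by (apply Rmin_glb_lt; auto). lra.
Qed.

Lemma RInt_mono a' a b b' : 0 < a' -> a' <= a -> a <= b -> b <= b' ->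
  RInt f a b <= RInt f a' b'.
Proof.
  intros. rewrite <- (RInt_Chasles f a' a b') by (apply exR; lra).
  rewrite <- (RInt_Chasles f a b b') by (apply exR; lra).
  unfold plus; simpl.
  assert (0 <= RInt f a' a) by (apply RInt_ge_0; auto; [apply exR; lra| intros; apply fpos; lra]).
  assert (0 <= RInt f b b') by (apply RInt_ge_0; auto; [apply exR; lra| intros; apply fpos; lra]).
  lra.
Qed.

Lemma sup_integral M :
  (forall a b, 0 < a -> a <= b -> RInt f a b <= M) ->
  exists L, is_RInt_gen f (at_right 0) (Rbar_locally p_infty) L /\
   (forall a b, 0 < a -> a <= b -> RInt f a b <= L) /\
   (forall B, (forall a b, 0 < a -> a <= b -> RInt f a b <= B) -> L <= B).
Proof.
  intros HM.
  set (E := fun v => exists a b, 0 < a /\ a <= b /\ v = RInt f a b).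
  destruct (completeness E) as [L [Hub Hlub]].
  { exists M. intros v [a [b [? [? ->]]]]. auto. }
  { exists (RInt f 1 1). exists 1, 1. repeat split; lra. }
  assert (Hub' : forall a b, 0 < a -> a <= b -> RInt f a b <= L).
  { intros a b ? ?. apply Hub. exists a, b; auto. }
  exists L. split; [|split; auto].
  2:{ intros B HB. apply Hlub. intros v [a [b [? [? ->]]]]. auto. }
  unfold is_RInt_gen, filterlimi, filter_le, filtermapi.
  intros P [eps HP].
  assert (Hex : exists a0 b0, 0 < a0 /\ a0 <= b0 /\ L - eps < RInt f a0 b0).
  { apply NNPP; intro Hn.
    assert (L <= L - eps).
    { apply Hlub. intros v [a [b [? [? ->]]]]. apply Rnot_lt_le. intro. apply Hn. exists a, b; auto. }
    destruct eps; simpl in *; lra. }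
  destruct Hex as [a0 [b0 [Ha0 [Hab0 Hlt]]]].
  apply Filter_prod with (Q := fun a => 0 < a < a0) (R := fun b => b0 < b).
  - exists (mkposreal a0 Ha0). intros y Hy Hy0. assert (H1 : Rabs (y - 0) < a0) by (apply ball_R; exact Hy).
    rewrite Rminus_0_r, Rabs_pos_eq in H1; simpl; lra.
  - exists b0. auto.
  - intros x y Hx Hy. simpl. exists (@RInt R_CompleteNormedModule f x y). split.
    + apply (@RInt_correct R_CompleteNormedModule), exR; lra.
    + apply HP. apply ball_R. 
      assert (RInt f a0 b0 <= RInt f x y) by (apply RInt_mono; lra).
      assert (RInt f x y <= L) by (apply Hub'; lra).
      apply Rabs_def1; lra.
Qed.

End Gen.

Definition fU z p q t := exp (- (z * t)) * Rpower t (p - 1) * Rpower (1 + t) q.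

Lemma fU_pos z p q t : 0 < fU z p q t.
Proof. unfold fU, Rpower. repeat apply Rmult_lt_0_compat; apply exp_pos. Qed.

Lemma fU_cont z p q t : 0 < t -> continuous (fU z p q) t.
Proof.
  intros Ht. apply (@ex_derive_continuous R_AbsRing R_NormedModule). unfold fU, Rpower. auto_derive. lra.
Qed.

Lemma fU_bound z p q : 0 < z -> 0 < p ->
  exists M, forall a b, 0 < a -> a <= b -> RInt (fU z p q) a b <= M.
Proof.
  intros Hz Hp.
  set (K := Rabs (p + q + 1) + 1).
  assert (HK : 0 < K) by (unfold K; pose proof (Rabs_pos (p+q+1)); lra).
  set (c := z / K).
  assert (Hc : 0 < c) by (unfold c; apply Rdiv_lt_0_compat; lra).
  set (lnA := z - K - K * ln c).
  set (g := fun t => exp (lnA + ((p - 1) * ln t - (p + 1) * ln (1 + t)))).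
  set (h := fun t => exp (lnA) / p * exp (p * (ln t - ln (1 + t)))).
  exists (exp lnA / p).
  intros a b Ha Hab.
  assert (Hd : forall t, 0 < t -> is_derive h t (g t)).
  { intros t Ht. unfold h, g. auto_derive. lra.
    replace (lnA + ((p - 1) * ln t - (p + 1) * ln (1 + t))) with
      (lnA + p * (ln t - ln (1 + t)) + - ln t + - ln (1+t)) by ring.
    rewrite !exp_plus, !exp_Ropp, !exp_ln by lra. unfold Rminus. field. repeat split; lra. }
  assert (Hgc : forall t, 0 < t -> continuous g t).
  { intros t Ht. apply (@ex_derive_continuous R_AbsRing R_NormedModule). unfold g. auto_derive. lra. }
  assert (Hi : is_RInt g a b (h b - h a)).
  { apply (is_RInt_derive h g a b).
    - intros x Hx. apply Hd. assert (0 < Rmin a b) by (apply Rmin_glb_lt; lra). lra.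
    - intros x Hx. apply Hgc. assert (0 < Rmin a b) by (apply Rmin_glb_lt; lra). lra. }
  assert (Hle : RInt (fU z p q) a b <= RInt g a b).
  { apply RInt_le; auto.
    - apply (exR (fU z p q)); auto. intros; apply fU_cont; auto. lra.
    - eexists; exact Hi.
    - intros t Ht. unfold fU, g, Rpower.
      rewrite <- !exp_plus. apply exp_le'.
      assert (L1 : 0 <= ln (1 + t)) by (rewrite <- ln_1; apply ln_le; lra).
      assert (L2 : ln c + ln (1 + t) <= c * (1 + t) - 1).
      { rewrite <- ln_mult by lra. pose proof (exp_ineq1_le (ln (c * (1 + t)))).
        rewrite exp_ln in H by (apply Rmult_lt_0_compat; lra). lra. }
      assert (L3 : (p + q + 1) * ln (1 + t) <= K * ln (1 + t)).
      { apply Rmult_le_compat_r; auto. unfold K. pose proof (Rle_abs (p+q+1)). lra. }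
      assert (L4 : K * c = z) by (unfold c; field; lra).
      assert (K * ln (1 + t) <= K * (c * (1 + t) - 1 - ln c)) by (apply Rmult_le_compat_l; lra).
      unfold lnA. nra. }
  rewrite (is_RInt_unique _ _ _ _ Hi) in Hle.
  assert (h a > 0) by (unfold h; apply Rmult_lt_0_compat; [apply Rdiv_lt_0_compat|]; auto; apply exp_pos).
  assert (h b <= exp lnA / p).
  { unfold h. rewrite <- (Rmult_1_r (exp lnA / p)) at 2. apply Rmult_le_compat_l.
    apply Rlt_le, Rdiv_lt_0_compat; auto; apply exp_pos.
    apply Rle_trans with (exp 0); [|rewrite exp_0; lra]. apply exp_le'.
    assert (ln b <= ln (1 + b)) by (apply ln_le; lra). nra. }
  lra.
Qed.

Lemma I_facts z p q : 0 < z -> 0 < p ->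
  exists L, RInt_gen (fU z p q) (at_right 0) (Rbar_locally p_infty) = L /\
   (forall a b, 0 < a -> a <= b -> RInt (fU z p q) a b <= L) /\
   (forall B, (forall a b, 0 < a -> a <= b -> RInt (fU z p q) a b <= B) -> L <= B) /\
   0 < L.
Proof.
  intros Hz Hp. destruct (fU_bound z p q Hz Hp) as [M HM].
  destruct (sup_integral (fU z p q)) with (M := M) as [L [HL [Hub Hlub]]]; auto.
  - intros; apply Rlt_le, fU_pos.
  - intros; apply fU_cont; auto.
  - exists L. split; [|split; [|split]]; auto.
    + apply is_RInt_gen_unique; auto.
    + apply Rlt_le_trans with (RInt (fU z p q) 1 2); [|apply Hub; lra].
      apply RInt_gt_0; [lra| intros; apply fU_pos| intros; apply fU_cont; lra].
Qed.

Lemma I_mono z1 z2 p q : 0 < z1 -> z1 <= z2 -> 0 < p ->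
  RInt_gen (fU z2 p q) (at_right 0) (Rbar_locally p_infty) <=
  RInt_gen (fU z1 p q) (at_right 0) (Rbar_locally p_infty).
Proof.
  intros H1 H12 Hp.
  destruct (I_facts z1 p q H1 Hp) as [L1 [E1 [U1 [B1 P1]]]].
  destruct (I_facts z2 p q ltac:(lra) Hp) as [L2 [E2 [U2 [B2 P2]]]].
  rewrite E1, E2. apply B2. intros a b Ha Hab.
  apply Rle_trans with (RInt (fU z1 p q) a b); [|apply U1; auto].
  apply RInt_le; auto.
  - apply (exR (fU z2 p q)); [intros; apply fU_cont; auto | lra | lra].
  - apply (exR (fU z1 p q)); [intros; apply fU_cont; auto | lra | lra].
  - intros t Ht. unfold fU. unfold Rpower.
    apply Rmult_le_compat_r; [apply Rlt_le, exp_pos|].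
    apply Rmult_le_compat_r; [apply Rlt_le, exp_pos|].
    apply exp_le'. nra.
Qed.

Lemma kummerU_eq a b z : 0 < a ->
  kummerU a b z = / RInt_gen (fU 1 a 0) (at_right 0) (Rbar_locally p_infty) *
                  RInt_gen (fU z a (b - a - 1)) (at_right 0) (Rbar_locally p_infty).
Proof.
  intros Ha. unfold kummerU, GammaF.
  replace (fun t => Rpower t (a - 1) * exp (- t)) with (fU 1 a 0). reflexivity.
  apply functional_extensionality. intros t. unfold fU.
  replace (Rpower (1 + t) 0) with 1 by (unfold Rpower; rewrite Rmult_0_l, exp_0; auto).
  rewrite Rmult_1_l. ring.
Qed.

Theorem mainTheorem1 (kappa theta sigma chi gamma : R)
  (hkappa : 0 < kappa) (htheta : 0 < theta) (hsigma : 0 < sigma)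
  (hgamma : 0 < gamma) (hchi : gamma < chi) :
  let xi := sqrt (kappa ^ 2 + 2 * sigma ^ 2 * (chi - gamma)) in
  let alpha := kappa * theta / sigma ^ 2 * (1 - kappa / xi) in
  let beta := 2 * kappa * theta / sigma ^ 2 in
  let zeta := 2 * xi / sigma ^ 2 in
  let nu := alpha * zeta / beta in
  let u_plus := fun r => exp (- (nu * r)) * kummerM alpha beta (zeta * r) in
  let u_minus := fun r => exp (- (nu * r)) * kummerU alpha beta (zeta * r) in
  (forall r s, 0 < r -> r < s -> u_plus r < u_plus s) /\
  (forall r s, 0 < r -> r < s -> u_minus s < u_minus r).
Proof.
  intros xi alpha beta zeta nu u_plus u_minus.
  assert (Hs2 : 0 < sigma ^ 2) by (apply pow_lt; lra).
  assert (Hxi : kappa < xi).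
  { unfold xi. rewrite <- (sqrt_pow2 kappa) at 1 by lra.
    apply sqrt_lt_1; [apply pow_le; lra| |].
    assert (0 <= 2 * sigma ^ 2 * (chi - gamma)) by (apply Rmult_le_pos; lra).
    pose proof (pow_le kappa 2 ltac:(lra)). lra.
    assert (0 < 2 * sigma ^ 2 * (chi - gamma)) by (apply Rmult_lt_0_compat; lra). lra. }
  assert (Hfrac : 0 < 1 - kappa / xi /\ 1 - kappa / xi < 1).
  { split. apply Rlt_Rminus. apply (Rmult_lt_reg_r xi); [lra|]. field_simplify; lra.
    assert (0 < kappa / xi) by (apply Rdiv_lt_0_compat; lra). lra. }
  assert (Hk0 : 0 < kappa * theta / sigma ^ 2).
  { apply Rdiv_lt_0_compat; [apply Rmult_lt_0_compat|]; lra. }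
  assert (Ha : 0 < alpha) by (unfold alpha; apply Rmult_lt_0_compat; lra).
  assert (Hb : beta = 2 * (kappa * theta / sigma ^ 2)) by (unfold beta; field; lra).
  assert (Hab : alpha < beta) by (unfold alpha; rewrite Hb; nra).
  assert (Hz : 0 < zeta) by (unfold zeta; apply Rdiv_lt_0_compat; lra).
  assert (Hnu : 0 < nu) by (unfold nu; apply Rdiv_lt_0_compat; [apply Rmult_lt_0_compat|]; lra).
  split.
  - intros r s Hr Hrs. unfold u_plus. apply (uplus_incr alpha beta zeta nu); auto.
  - intros r s Hr Hrs. unfold u_minus. rewrite !kummerU_eq by auto.
    destruct (I_facts 1 alpha 0 ltac:(lra) Ha) as [G [EG [_ [_ PG]]]].
    destruct (I_facts (zeta * r) alpha (beta - alpha - 1) ltac:(nra) Ha) as [Lr [Er [_ [_ Pr]]]].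
    pose proof (I_mono (zeta * r) (zeta * s) alpha (beta - alpha - 1) ltac:(nra) ltac:(nra) Ha) as Hm.
    rewrite Er in Hm. rewrite EG, Er.
    set (Ls := RInt_gen (fU (zeta * s) alpha (beta - alpha - 1)) (at_right 0) (Rbar_locally p_infty)) in *.
    assert (Hexp : exp (- (nu * s)) < exp (- (nu * r))) by (apply exp_increasing; nra).
    assert (HiG : 0 < / G) by (apply Rinv_0_lt_compat; auto).
    assert (0 < exp (- (nu * s))) by apply exp_pos.
    apply Rle_lt_trans with (exp (- (nu * s)) * (/ G * Lr)).
    + apply Rmult_le_compat_l; [lra|]. apply Rmult_le_compat_l; lra.
    + apply Rmult_lt_compat_r; [|auto]. apply Rmult_lt_0_compat; auto.
Qed.
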